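(* Let $n \ge 2$, $k \ge 1$ and $n_i, m_i \in \mathbb{Z}\setminus\{0\}$ for $1 \le i \le k$. Put $n_{k+1} = 1 - \sum_{i=1}^k n_i$ and $m_{k+1} = 1 - \sum_{i=1}^k m_i$. (I) If $n_i' \equiv n_i \pmod n$ and $m_i' \equiv m_i \pmod n$ for all $1\le i\le k$, then $\mathcal{P}_n(n_1,\dots,n_k;m_1,\dots,m_k) \simeq_Q \mathcal{P}_n(n_1',\dots,n_k';m_1',\dots,m_k')$. (II) $\mathcal{P}_n(n_1,\dots,n_k;m_1,\dots,m_k) \simeq_Q \mathcal{P}_n(n_2,\dots,n_{k+1};m_2,\dots,m_{k+1})$. (III) $\mathcal{P}_n(n_1,\dots,n_k;m_1,\dots,m_k) \simeq_Q \mathcal{P}_n(m_1,\dots,m_k;n_2,\dots,n_{k+1})$.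
   Context: For integers $n\ge 2$, $k\ge 0$, $n_1,\dots,n_k,m_1,\dots,m_k$, with $n_{k+1} = 1 - \sum_{i=1}^k n_i$, $m_{k+1} = 1 - \sum_{i=1}^k m_i$, $\mathcal{P}_n(n_1,\dots,n_k;m_1,\dots,m_k) = \langle x, y \mid x^n y^{-2},\ x^{n_1} y x^{m_1} y^{-1} \cdots x^{n_{k+1}} y x^{m_{k+1}} y^{-1} \rangle$. Two finite presentations on the same generators are $Q$-equivalent ($\simeq_Q$) if related by a finite sequence of the moves: replace a relator $r_i$ by $r_ir_j$ ($j\neq i$); replace $r_i$ by $r_i^{-1}$; replace $r_i$ by $wr_iw^{-1}$ for some $w$ in the free group on the generators. *)

(* Defs.v *)
(* free group on {x, y} via freely reduced words. *)
From mathcomp Require Import all_boot all_order all_algebra.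
From Stdlib Require Import Relations.
Set Implicit Arguments. Unset Strict Implicit. Unset Printing Implicit Defensive.
Import GRing.Theory Num.Theory.

(* A letter: (is_y, is_inverse).  (false,false) = x, (false,true) = x^-1,
   (true,false) = y, (true,true) = y^-1. *)
Definition letter := (bool * bool)%type.
Definition word := seq letter.

Definition lx : letter := (false, false).
Definition ly : letter := (true, false).
Definition linv (a : letter) : letter := (a.1, ~~ a.2).

Definition red (w : word) : word :=
  foldr (fun a acc => match acc with
                      | b :: t => if b == linv a then t else a :: acc
                      | [::] => [:: a] end) [::] w.

Definition fmul (u v : word) : word := red (u ++ v).
Definition finv (w : word) : word := rev (map linv w).

Definition wpow (a : letter) (m : int) : word :=
  match m with
  | Posz k => nseq k a
  | Negz k => nseq k.+1 (linv a)
  end.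

(* A finite presentation on the generators x, y: its list of relators. *)
Definition presentation := seq word.

Inductive Qmove (P : presentation) : presentation -> Prop :=
  | Qmul i j : i < size P -> j < size P -> i != j ->
      Qmove P (set_nth [::] P i (fmul (nth [::] P i) (nth [::] P j)))
  | Qinv i : i < size P ->
      Qmove P (set_nth [::] P i (finv (nth [::] P i)))
  | Qconj i (w : word) : i < size P ->
      Qmove P (set_nth [::] P i (fmul (fmul w (nth [::] P i)) (finv w))).

(* Q-equivalence: related by a finite sequence of Q-moves, relators being
   regarded as elements of the free group (i.e. up to free reduction). *)
Definition Qequiv (P P' : presentation) : Prop :=
  clos_refl_trans presentation Qmove (map red P) (map red P').

Definition last_exp (ns : seq int) : int := (1 - \sum_(a <- ns) a)%R.

Definition block (a b : int) : word :=
  wpow lx a ++ [:: ly] ++ wpow lx b ++ [:: linv ly].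

(* P_n(n_1..n_k; m_1..m_k) = < x, y | x^n y^{-2}, prod_{i=1}^{k+1} x^{n_i} y x^{m_i} y^{-1} > *)
Definition Pn (n : nat) (ns ms : seq int) : presentation :=
  [:: nseq n lx ++ nseq 2 (linv ly);
      flatten [seq block ab.1 ab.2 | ab <- zip (rcons ns (last_exp ns))
                                              (rcons ms (last_exp ms))] ].

(* Main.v *)
Require Import Defs.
From mathcomp Require Import all_boot all_order all_algebra.
Import GRing.Theory Num.Theory.
From mathcomp Require Import ring.
From Stdlib Require Import Relations.
Import Defs.
Set Implicit Arguments. Unset Strict Implicit. Unset Printing Implicit Defensive.

Definition step (a : letter) (acc : word) : word :=
  match acc with
  | b :: t => if b == linv a then t else a :: acc
  | [::] => [:: a] end.

Lemma red_cons a w : red (a :: w) = step a (red w).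
Proof. by []. Qed.

Lemma linvK : involutive linv.
Proof. by case=> [] [] []. Qed.

Lemma linv_neq a : (a == linv a) = false.
Proof. by case: a => [] [] []. Qed.

Definition reduced (w : word) : bool :=
  if w is a :: t then path (fun a b => b != linv a) a t else true.

Lemma step_reduced a w : reduced w -> reduced (step a w).
Proof.
case: w => [|b t] //=.
case: ifP => [_|hb]; first by case: t => //= c t /andP[].
by move=> h /=; rewrite hb h.
Qed.

Lemma red_reduced w : reduced (red w).
Proof. by elim: w => //= a w IH; apply: step_reduced. Qed.

Lemma red_id w : reduced w -> red w = w.
Proof.
elim: w => //= a t IH h.
have ht : reduced t by case: t h IH => //= c t /andP[].
rewrite IH //. case: t h {IH ht} => //= c t /andP[hc _].
by rewrite (negbTE hc).
Qed.

Lemma redK w : red (red w) = red w.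
Proof. exact/red_id/red_reduced. Qed.

Lemma stepK a w : reduced w -> step a (step (linv a) w) = w.
Proof.
case: w => [|b t]; first by rewrite /step eqxx.
rewrite /step linvK. case: eqP => [->|hb] h.
  case: t h => [|c t] //=. case/andP=> hc _. by rewrite (negbTE hc).
by rewrite eqxx.
Qed.

Definition act (u w : word) := foldr step w u.

Lemma red_cat u v : red (u ++ v) = act u (red v).
Proof. by elim: u => //= a u ->. Qed.

Lemma act_reduced u w : reduced w -> reduced (act u w).
Proof. by elim: u => //= a u IH h; apply/step_reduced/IH. Qed.

Lemma act_step a s w : reduced w -> act (step a s) w = step a (act s w).
Proof.
move=> hw; case: s => [|b t] //=.
case: eqP => [->|] //=. by rewrite stepK // act_reduced.
Qed.

Lemma act_red u w : reduced w -> act (red u) w = act u w.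
Proof. move=> hw; elim: u => //= a u IH. by rewrite act_step // IH. Qed.

Lemma red_catr u v : red (u ++ red v) = red (u ++ v).
Proof. by rewrite !red_cat redK. Qed.

Lemma red_catl u v : red (red u ++ v) = red (u ++ v).
Proof. by rewrite !red_cat act_red // red_reduced. Qed.

Lemma feq_cat u u' v v' : red u = red u' -> red v = red v' -> red (u ++ v) = red (u' ++ v').
Proof. by move=> hu hv; rewrite -red_catl hu red_catl -red_catr hv red_catr. Qed.

Lemma finvK : involutive finv.
Proof. by move=> w; rewrite /finv map_rev revK -map_comp (eq_map linvK) map_id. Qed.

Lemma finv_cons a w : finv (a :: w) = finv w ++ [:: linv a].
Proof. by rewrite /finv /= rev_cons cats1. Qed.

Lemma finv_cat u v : finv (u ++ v) = finv v ++ finv u.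
Proof. by rewrite /finv map_cat rev_cat. Qed.

Lemma red_cancel u : red (u ++ finv u) = [::].
Proof.
elim: u => //= a u IH.
by rewrite finv_cons catA -red_catl IH /= eqxx.
Qed.

Lemma red_cancel' u : red (finv u ++ u) = [::].
Proof. by rewrite -{2}(finvK u) red_cancel. Qed.

Lemma cancel_mid a u c : red (a ++ u ++ finv u ++ c) = red (a ++ c).
Proof.
have h: red (u ++ finv u ++ c) = red c by rewrite catA -red_catl red_cancel.
by rewrite -red_catr h red_catr.
Qed.

Lemma cancel_mid' a u c : red (a ++ finv u ++ u ++ c) = red (a ++ c).
Proof.
have h: red (finv u ++ u ++ c) = red c by rewrite catA -red_catl red_cancel'.
by rewrite -red_catr h red_catr.
Qed.

Lemma feq_ctx w w' u v : red u = red v -> red (w ++ u ++ w') = red (w ++ v ++ w').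
Proof. by move=> h; apply: feq_cat => //; apply: feq_cat. Qed.

Lemma red_finv_red w : red (finv (red w)) = red (finv w).
Proof.
have e1: red (finv (red w)) = red (finv (red w) ++ w ++ finv w).
  by rewrite -red_catr red_cancel cats0.
have e2: red (finv (red w) ++ w) = [::].
  by rewrite -red_catr red_cancel'.
by rewrite e1 catA -red_catl e2.
Qed.

Notation crt := (clos_refl_trans presentation Qmove).

Lemma mv P Q Q' : Qmove P Q -> Q = Q' -> crt P Q'.
Proof. by move=> h <-; apply: rt_step. Qed.

Lemma core R0 U b : red R0 = R0 -> red U = U ->
  crt [:: R0; U] [:: R0; red (U ++ finv b ++ R0 ++ b)].
Proof.
move=> hR hU.
set R' := red (finv b ++ R0 ++ b).
apply: rt_trans (_ : crt _ [:: R'; U]) _.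
  apply: mv (@Qconj [:: R0; U] 0 (finv b) erefl) _ => //=.
  by rewrite /fmul finvK red_catl -catA.
apply: rt_trans (_ : crt _ [:: R'; red (U ++ finv b ++ R0 ++ b)]) _.
  apply: mv (@Qmul [:: R'; U] 1 0 erefl erefl erefl) _ => //=.
  by rewrite /fmul red_catr.
apply: mv (@Qconj [:: R'; red (U ++ finv b ++ R0 ++ b)] 0 b erefl) _ => //=.
rewrite /fmul red_catl /R' -catA (feq_ctx b (finv b) (redK _)).
by rewrite -!catA -(cat0s (b ++ _)) cancel_mid /= -[finv b]cats0 cancel_mid cats0 hR.

Qed.

Lemma conj1 R0 U w : red U = U ->
  crt [:: R0; U] [:: R0; red (w ++ U ++ finv w)].
Proof.
move=> hU; apply: mv (@Qconj [:: R0; U] 1 w erefl) _ => //=.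
by rewrite /fmul red_catl catA.
Qed.

Lemma inv0 R0 U : crt [:: R0; U] [:: red (finv R0); U].
Proof.
apply: rt_trans (_ : crt _ [:: finv R0; U]) _.
  by apply: mv (@Qinv [:: R0; U] 0 erefl) _.
apply: mv (@Qconj [:: finv R0; U] 0 [::] erefl) _ => //=.
by rewrite /fmul /= cats0 redK.
Qed.

Lemma cancel2 a r c : red ((a ++ r ++ c) ++ finv c ++ finv r ++ c) = red (a ++ c).
Proof. by rewrite -!catA (catA a r) cancel_mid -catA cancel_mid. Qed.

Section N.
Variable n : nat.
Definition r1 : word := nseq n lx ++ nseq 2 (linv ly).

Definition R2 u v := crt [:: red r1; red u] [:: red r1; red v].

Lemma R2_feq u v : red u = red v -> R2 u v.
Proof. by rewrite /R2 => ->; apply: rt_refl. Qed.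

Lemma R2_trans u v w : R2 u v -> R2 v w -> R2 u w.
Proof. exact: rt_trans. Qed.

Lemma R2_conj u w : R2 u (w ++ u ++ finv w).
Proof.
rewrite /R2. have := conj1 (red r1) w (redK u).
by rewrite (feq_ctx w (finv w) (redK u)).
Qed.

Lemma R2_mul u b : R2 u (u ++ finv b ++ r1 ++ b).
Proof.
rewrite /R2. have := core b (redK r1) (redK u).
have -> // : red (red u ++ finv b ++ red r1 ++ b) = red (u ++ finv b ++ r1 ++ b).
by rewrite red_catl; do 2 apply: feq_cat => //; apply: feq_cat => //; rewrite redK.
Qed.

Lemma R2_mulinv u b : R2 u (u ++ finv b ++ finv r1 ++ b).
Proof.
rewrite /R2. set R := red r1.
apply: rt_trans (inv0 _ _) _.
apply: rt_trans (core b (redK _) (redK u)) _.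
apply: rt_trans (inv0 _ _) _.
rewrite red_finv_red finvK redK.
have -> : red (red u ++ finv b ++ red (finv R) ++ b) = red (u ++ finv b ++ finv r1 ++ b).
  by rewrite red_catl; do 2 apply: feq_cat => //; apply: feq_cat => //; rewrite redK /R red_finv_red.
exact: rt_refl.
Qed.

Definition N1 u v := exists a c, red u = red (a ++ c) /\ red v = red (a ++ r1 ++ c).
Definition S u v := [\/ red u = red v, N1 u v | N1 v u].
Definition Neq := clos_refl_trans word S.

Lemma Neq_R2 u v : Neq u v -> R2 u v.
Proof.
elim=> {u v} [u v []|u|u v w _ h1 _ h2].
- exact: R2_feq.
- case=> a [c [hu hv]]. apply: R2_trans (R2_mul u c) _; apply: R2_feq.
  by rewrite -red_catl hu red_catl -catA cancel_mid hv.
- case=> a [c [hv hu]]. apply: R2_trans (R2_mulinv u c) _; apply: R2_feq.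
  by rewrite -red_catl hu red_catl cancel2 hv.

- exact: rt_refl.
- exact: R2_trans h1 h2.
Qed.

Lemma Neq_refl u : Neq u u.
Proof. exact: rt_refl. Qed.

Lemma Neq_trans u v w : Neq u v -> Neq v w -> Neq u w.
Proof. exact: rt_trans. Qed.

Lemma Neq_sym u v : Neq u v -> Neq v u.
Proof.
elim=> {u v} [u v h|u|u v w _ h1 _ h2].
- apply: rt_step; case: h => [h|h|h]; by [constructor 1|constructor 3|constructor 2].
- exact: rt_refl.
- exact: rt_trans h2 h1.
Qed.

Lemma feq_Neq u v : red u = red v -> Neq u v.
Proof. by move=> h; apply: rt_step; constructor 1. Qed.

Lemma Neq_ctx w w' u v : Neq u v -> Neq (w ++ u ++ w') (w ++ v ++ w').
Proof.
elim=> {u v} [u v h|u|u v x _ h1 _ h2].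
- apply: rt_step; case: h => [h|[a [c [h1 h2]]]|[a [c [h1 h2]]]].
  + by constructor 1; apply: feq_ctx.
  + constructor 2; exists (w ++ a), (c ++ w').
    by split; [rewrite (feq_ctx w w' h1) | rewrite (feq_ctx w w' h2)]; rewrite -!catA.
  + constructor 3; exists (w ++ a), (c ++ w').
    by split; [rewrite (feq_ctx w w' h1) | rewrite (feq_ctx w w' h2)]; rewrite -!catA.
- exact: rt_refl.
- exact: rt_trans h1 h2.
Qed.

Lemma Neq_cat u u' v v' : Neq u u' -> Neq v v' -> Neq (u ++ v) (u' ++ v').
Proof.
move=> h1 h2. apply: Neq_trans (_ : Neq _ (u' ++ v)) _.
  by have := Neq_ctx [::] v h1; rewrite /=.
by have := Neq_ctx u' [::] h2; rewrite !cats0.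
Qed.

Lemma Neq_del a c : Neq (a ++ r1 ++ c) (a ++ c).
Proof. by apply: rt_step; constructor 3; exists a, c. Qed.
End N.

Open Scope ring_scope.

Lemma nseqSr (T : Type) k (a : T) : nseq k.+1 a = nseq k a ++ [:: a].
Proof. by rewrite -addn1 nseqD. Qed.

Lemma red_ai u a : red (u ++ [:: a; linv a]) = red u.
Proof. by rewrite -red_catr /= eqxx cats0. Qed.

Lemma red_ia u a : red (u ++ [:: linv a; a]) = red u.
Proof. by rewrite -red_catr /= linvK eqxx cats0. Qed.

Lemma wpowN a (k : nat) : wpow a (- k%:Z) = nseq k (linv a).
Proof. by case: k => // k; rewrite -NegzE. Qed.

Lemma wpow_S a m : red (wpow a (m + 1)) = red (wpow a m ++ [:: a]).
Proof.
case: m => k.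
  by rewrite -PoszD addn1 /wpow nseqSr.
rewrite NegzE -[in LHS]addn1 PoszD opprD addrNK !wpowN nseqSr -catA.
by rewrite red_ia.
Qed.

Lemma wpow_P a m : red (wpow a (m - 1)) = red (wpow a m ++ [:: linv a]).
Proof.
case: m => k.
  case: k => [|k] //.
  by rewrite -[in LHS]addn1 PoszD addrK /wpow nseqSr -catA red_ai.
by rewrite NegzE -opprD -PoszD addn1 !wpowN nseqSr.
Qed.

Lemma wpow_addn a m (k : nat) : red (wpow a (m + k%:Z)) = red (wpow a m ++ nseq k a).
Proof.
elim: k => [|k IH]; first by rewrite addr0 cats0.
rewrite -addn1 PoszD addrA wpow_S -red_catl IH red_catl nseqD catA //.
Qed.

Lemma wpow_subn a m (k : nat) : red (wpow a (m - k%:Z)) = red (wpow a m ++ nseq k (linv a)).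
Proof.
elim: k => [|k IH]; first by rewrite subr0 cats0.
rewrite -addn1 PoszD opprD addrA wpow_P -red_catl IH red_catl nseqD catA //.
Qed.

Lemma wpow_add a m1 m2 : red (wpow a (m1 + m2)) = red (wpow a m1 ++ wpow a m2).
Proof.
case: m2 => k; first exact: wpow_addn.
by rewrite NegzE wpow_subn.
Qed.

Section C.
Variable n : nat.
Local Notation Neq := (Neq n).
Local Notation r1 := (r1 n).

Definition central w := forall u, Neq (w ++ u) (u ++ w).

Lemma central_cat w1 w2 : central w1 -> central w2 -> central (w1 ++ w2).
Proof.
move=> h1 h2 u. apply: Neq_trans (_ : Neq (w1 ++ u ++ w2) _).
  by rewrite -catA; apply: Neq_cat (Neq_refl n _) (h2 u).
by rewrite !catA; apply: Neq_cat (h1 u) (Neq_refl n _).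
Qed.

Lemma central_finv w : central w -> central (finv w).
Proof.
move=> h u.
apply: Neq_trans (_ : Neq _ (finv w ++ (u ++ w) ++ finv w)) _.
  apply: feq_Neq. have := cancel_mid (finv w ++ u) w [::].
  by rewrite !cats0 -!catA => ->.
apply: Neq_trans (_ : Neq _ (finv w ++ (w ++ u) ++ finv w)) _.
  exact/Neq_ctx/Neq_sym/h.
apply: feq_Neq. have := cancel_mid' [::] w (u ++ finv w).
by rewrite /= -!catA => ->.
Qed.

Lemma central_letters w : (forall a, Neq (w ++ [:: a]) ([:: a] ++ w)) -> central w.
Proof.
move=> h u; elim: u => [|a u IH]; first by rewrite cats0; apply: Neq_refl n _.
rewrite -cat1s catA -catA.
apply: Neq_trans (_ : Neq ([:: a] ++ w ++ u) _).
  by rewrite catA; apply: Neq_cat (h a) (Neq_refl n _).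
exact: Neq_cat (Neq_refl n _) IH.
Qed.

Lemma comm_linv w a : Neq (w ++ [:: a]) ([:: a] ++ w) ->
  Neq (w ++ [:: linv a]) ([:: linv a] ++ w).
Proof.
move=> h.
apply: Neq_trans (_ : Neq _ ([:: linv a] ++ ([:: a] ++ w) ++ [:: linv a])) _.
  apply: feq_Neq. have := cancel_mid' [::] [:: a] (w ++ [:: linv a]).
  by rewrite /= => ->.
apply: Neq_trans (_ : Neq _ ([:: linv a] ++ (w ++ [:: a]) ++ [:: linv a])) _.
  exact/Neq_ctx/Neq_sym.
apply: feq_Neq; rewrite -!catA; apply: feq_cat => //=; exact: red_ai.
Qed.

Definition z := nseq n lx.

Lemma z_y2 : Neq z [:: ly; ly].
Proof.
apply: Neq_trans (_ : Neq _ ([::] ++ r1 ++ [:: ly; ly])) _; last exact: Neq_del.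
apply: feq_Neq; rewrite /= /r1 -catA -red_catr.
by have -> : red (nseq 2 (linv ly) ++ [:: ly; ly]) = [::] by []; rewrite cats0.
Qed.

Lemma Neq_ctx' u v w w' U V : Neq u v -> U = w ++ u ++ w' -> V = w ++ v ++ w' -> Neq U V.
Proof. by move=> h -> ->; apply: Neq_ctx. Qed.

Lemma z_central : central z.
Proof.
apply: central_letters => -[[] []].
- apply: (comm_linv (a := ly)).
  apply: Neq_trans (_ : Neq _ ([:: ly; ly] ++ [:: ly])) _.
    exact: Neq_cat z_y2 (Neq_refl n _).
  apply: Neq_trans (_ : Neq _ ([:: ly] ++ [:: ly; ly])) _; first exact: Neq_refl.
  exact: Neq_cat (Neq_refl n _) (Neq_sym z_y2).
- apply: Neq_trans (_ : Neq _ ([:: ly; ly] ++ [:: ly])) _.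
    exact: Neq_cat z_y2 (Neq_refl n _).
  apply: Neq_trans (_ : Neq _ ([:: ly] ++ [:: ly; ly])) _; first exact: Neq_refl.
  exact: Neq_cat (Neq_refl n _) (Neq_sym z_y2).
- apply: (comm_linv (a := lx)). by rewrite /z -nseqSr; apply: Neq_refl.
- by rewrite /z -nseqSr; apply: Neq_refl.
Qed.

Lemma finv_nseq k a : finv (nseq k a) = nseq k (linv a).
Proof. by rewrite /finv map_nseq rev_nseq. Qed.

Lemma wpow_central d : (n%:Z %| d)%Z -> central (wpow lx d).
Proof.
case/dvdzP=> q ->.
have hk k : central (nseq (k * n) lx).
  elim: k => [|k IH]; first by move=> u; rewrite cats0; apply: Neq_refl.
  by rewrite mulSn nseqD; apply: central_cat => //; apply: z_central.
case: q => k; first by rewrite -PoszM; apply: hk.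
rewrite NegzE mulNr -PoszM wpowN -finv_nseq. exact/central_finv/hk.
Qed.

Lemma y_swap v : Neq ([:: ly] ++ v ++ [:: linv ly]) ([:: linv ly] ++ v ++ [:: ly]).
Proof.
apply: Neq_trans (_ : Neq _ ([:: linv ly] ++ [:: ly; ly] ++ v ++ [:: linv ly])) _.
  by apply: feq_Neq; have := cancel_mid' [::] [:: ly] ([:: ly] ++ v ++ [:: linv ly]); move=> <-.
apply: Neq_trans (_ : Neq _ ([:: linv ly] ++ z ++ v ++ [:: linv ly])) _.
  exact: (Neq_ctx' (w := [:: linv ly]) (w' := v ++ [:: linv ly]) (Neq_sym z_y2)).
apply: Neq_trans (_ : Neq _ ([:: linv ly] ++ v ++ z ++ [:: linv ly])) _.
  by apply: (Neq_ctx' (w := [:: linv ly]) (w' := [:: linv ly]) (z_central v)); rewrite -!catA.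
apply: Neq_trans (_ : Neq _ ([:: linv ly] ++ v ++ [:: ly; ly] ++ [:: linv ly])) _.
  by apply: (Neq_ctx' (w := [:: linv ly] ++ v) (w' := [:: linv ly]) z_y2); rewrite -!catA.
apply: feq_Neq. apply: feq_cat => //. by apply: feq_cat.
Qed.

Local Notation X := (wpow lx).
Local Notation yi := (linv ly).

Lemma block_shift a b d e : (n%:Z %| d)%Z -> (n%:Z %| e)%Z ->
  Neq (block (a + d) (b + e)) (block a b ++ X (d + e)).
Proof.
move=> hd he; rewrite /block.
apply: Neq_trans (_ : Neq _ (X a ++ X d ++ [:: ly] ++ X b ++ X e ++ [:: yi])) _.
  apply: feq_Neq.
  have h : red (X (a + d) ++ [:: ly] ++ X (b + e) ++ [:: yi])
         = red ((X a ++ X d) ++ [:: ly] ++ (X b ++ X e) ++ [:: yi]).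
    apply: feq_cat (wpow_add _ _ _) _; apply: feq_cat => //.
    exact: feq_cat (wpow_add _ _ _) _.
  by rewrite h -!catA.
apply: Neq_trans (_ : Neq _ (X a ++ [:: ly] ++ X b ++ X e ++ [:: yi] ++ X d)) _.
  by apply: (Neq_ctx' (w := X a) (w' := [::]) (wpow_central hd ([:: ly] ++ X b ++ X e ++ [:: yi])));
    rewrite ?cats0 -?catA.
apply: Neq_trans (_ : Neq _ (X a ++ [:: ly] ++ X b ++ [:: yi] ++ X e ++ X d)) _.
  by apply: (Neq_ctx' (w := X a ++ [:: ly] ++ X b) (w' := X d) (wpow_central he [:: yi]));
    rewrite -?catA.
apply: feq_Neq. rewrite -!catA; do 4 apply: feq_cat => //.
by rewrite addrC wpow_add.
Qed.

Definition flat (L : seq (int * int)) := flatten [seq block p.1 p.2 | p <- L].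

Lemma flat_shift (L L' : seq (int * int)) : size L = size L' ->
  (forall i, (i < size L)%N -> (n%:Z %| (nth (0,0) L' i).1 - (nth (0,0) L i).1)%Z /\
                               (n%:Z %| (nth (0,0) L' i).2 - (nth (0,0) L i).2)%Z) ->
  Neq (flat L') (flat L ++ X (\sum_(p <- zip L L') ((p.2.1 - p.1.1) + (p.2.2 - p.1.2)))).
Proof.
elim: L L' => [|p L IH] [|p' L'] //=.
  by move=> _ _; rewrite big_nil; apply: Neq_refl.
case=> hs h.
have [hd he] := h 0%N isT.
have IH' := IH L' hs (fun i hi => h i.+1 hi).
rewrite big_cons /flat /= -/(flat L) -/(flat L').
set d := p'.1 - p.1; set e := p'.2 - p.2.
set S := \sum_(_ <- _) _.
have -> : block p'.1 p'.2 = block (p.1 + d) (p.2 + e) by rewrite /d /e !subrKC.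
apply: Neq_trans (_ : Neq _ ((block p.1 p.2 ++ X (d + e)) ++ (flat L ++ X S))) _.
  exact: Neq_cat (block_shift _ _ hd he) IH'.
apply: Neq_trans (_ : Neq _ (block p.1 p.2 ++ flat L ++ X (d + e) ++ X S)) _.
  apply: (Neq_ctx' (w := block p.1 p.2) (w' := X S) (wpow_central (rpredD hd he) (flat L)));
    by rewrite -?catA.
apply: feq_Neq. rewrite -!catA.
repeat (apply: feq_cat; first done). by rewrite wpow_add.
Qed.
End C.

Open Scope ring_scope.

Lemma sum_zip1 (s t : seq (int)) : size s = size t ->
  \sum_(p <- zip s t) p.1 = \sum_(a <- s) a.
Proof.
elim: s t => [|a s IH] [|b t] //=; first by rewrite !big_nil.
move=> /eqP; rewrite eqSS => /eqP h; by rewrite !big_cons IH.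
Qed.

Lemma sum_zip2 (s t : seq (int)) : size s = size t ->
  \sum_(p <- zip s t) p.2 = \sum_(a <- t) a.
Proof.
elim: s t => [|a s IH] [|b t] //=; first by rewrite !big_nil.
move=> /eqP; rewrite eqSS => /eqP h; by rewrite !big_cons IH.
Qed.

Lemma sum_zipF1 (s t : seq (int * int)) (F : int * int -> int) : size s = size t ->
  \sum_(p <- zip s t) F p.1 = \sum_(a <- s) F a.
Proof.
elim: s t => [|a s IH] [|b t] //=; first by rewrite !big_nil.
move=> /eqP; rewrite eqSS => /eqP h; by rewrite !big_cons IH.
Qed.

Lemma sum_zipF2 (s t : seq (int * int)) (F : int * int -> int) : size s = size t ->
  \sum_(p <- zip s t) F p.2 = \sum_(a <- t) F a.
Proof.
elim: s t => [|a s IH] [|b t] //=; first by rewrite !big_nil.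
move=> /eqP; rewrite eqSS => /eqP h; by rewrite !big_cons IH.
Qed.

Lemma sum_rcons_last (s : seq int) : \sum_(a <- rcons s (last_exp s)) a = 1.
Proof. rewrite -cats1 big_cat big_seq1 /last_exp. simpl. ring. Qed.

Lemma last_exp_rot (a : int) s0 : last_exp (rcons s0 (last_exp (a :: s0))) = a.
Proof. rewrite /last_exp -cats1 big_cat big_seq1 big_cons /=. ring. Qed.

Lemma dvd_sum_diff d (s t : seq int) : size s = size t ->
  (forall i, (i < size s)%N -> (d %| nth 0 t i - nth 0 s i)%Z) ->
  (d %| \sum_(a <- t) a - \sum_(a <- s) a)%Z.
Proof.
elim: s t => [|a s IH] [|b t] //=; first by rewrite !big_nil subrr dvdz0.
move=> /eqP; rewrite eqSS => /eqP hs h. rewrite !big_cons opprD addrACA.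
apply: rpredD; first exact: (h 0%N).
exact: IH hs (fun i hi => h i.+1 hi).
Qed.

Lemma Neq_flatten n (T : Type) (f g : T -> word) (s : seq T) :
  (forall p, Neq n (f p) (g p)) -> Neq n (flatten (map f s)) (flatten (map g s)).
Proof.
move=> h; elim: s => [|p s IH] /=; first exact: Neq_refl.
exact: Neq_cat (h p) IH.
Qed.

Lemma shift_eq (T : Type) (P Q : int -> seq T) (a1 c : int) (a0 b : seq int) :
  size b = (size a0).+1 ->
  flatten [seq P p.1 ++ Q p.2 | p <- zip (a1 :: a0) b] ++ P c
  = P a1 ++ flatten [seq Q p.1 ++ P p.2 | p <- zip b (rcons a0 c)].
Proof.
elim: a0 a1 b => [|a2 a0 IH] a1 [|b1 b0] //=.
  by case: b0 => //= _; rewrite !cats0 catA.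
move=> /eqP; rewrite eqSS => /eqP hs. rewrite -!catA IH //.
Qed.

Lemma telescope (T : Type) (g : T -> word) (w : word) (s : seq T) v :
  red (w ++ flatten [seq finv w ++ g p | p <- s] ++ v)
  = red (flatten [seq g p ++ finv w | p <- s] ++ w ++ v).
Proof.
elim: s v => [|p s IH] v //=.
rewrite -!catA.
have h1 := cancel_mid [::] w (g p ++ flatten [seq finv w ++ g p | p <- s] ++ v).
rewrite /= in h1; rewrite h1.
rewrite (feq_cat (erefl (red (g p))) (feq_cat (erefl (red (finv w))) (esym (IH v)))).
by rewrite cancel_mid'.
Qed.

Definition Lz (ns ms : seq int) := zip (rcons ns (last_exp ns)) (rcons ms (last_exp ms)).

Lemma QE n ns ms ns' ms' : R2 n (flat (Lz ns ms)) (flat (Lz ns' ms')) ->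
  Qequiv (Pn n ns ms) (Pn n ns' ms').
Proof. by []. Qed.

Lemma partI n k (ns ms ns' ms' : seq int) :
  size ns = k -> size ms = k -> size ns' = k -> size ms' = k ->
  (forall i, (i < k)%N ->
            (nth 0%R ns' i = nth 0%R ns i %[mod n%:Z])%Z /\
            (nth 0%R ms' i = nth 0%R ms i %[mod n%:Z])%Z) ->
  Qequiv (Pn n ns ms) (Pn n ns' ms').
Proof.
move=> hns hms hns' hms' hmod. apply: QE. apply: Neq_R2. apply: Neq_sym.
have hsz : size (Lz ns ms) = size (Lz ns' ms').
  by rewrite /Lz !size_zip !size_rcons hns hms hns' hms'.
have hcond : forall i, (i < size (Lz ns ms))%N ->
   (n%:Z %| (nth (0,0) (Lz ns' ms') i).1 - (nth (0,0) (Lz ns ms) i).1)%Z /\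
   (n%:Z %| (nth (0,0) (Lz ns' ms') i).2 - (nth (0,0) (Lz ns ms) i).2)%Z.
  move=> i; rewrite /Lz size_zip !size_rcons hns hms minnn ltnS => hi.
  rewrite !nth_zip ?size_rcons ?hns ?hms ?hns' ?hms' //= !nth_rcons hns hms hns' hms'.
  case: (ltnP i k) => hik.
    have [h1 h2] := hmod i hik.
    by split; rewrite -eqz_mod_dvd; apply/eqP.
  have -> : i = k by apply/eqP; rewrite eqn_leq hi hik.
  rewrite ?ltnn eqxx.
  have hd : forall (s s' : seq int), size s = k -> size s' = k ->
      (forall i, (i < k)%N -> (nth 0 s' i = nth 0 s i %[mod n%:Z])%Z) ->
      (n%:Z %| last_exp s' - last_exp s)%Z.
    move=> s s' hs hs' hm.
    have -> : last_exp s' - last_exp s = \sum_(a <- s) a - \sum_(a <- s') a.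
      rewrite /last_exp. ring.
    apply: dvd_sum_diff; first by rewrite hs hs'.
    move=> j; rewrite hs' => hj. rewrite -eqz_mod_dvd eq_sym; apply/eqP; exact: hm.
  split; apply: hd => // j hj; by have [h1 h2] := hmod j hj.
have := flat_shift hsz hcond.
rewrite big_split /= !sumrB.
rewrite (sum_zipF2 fst) // (sum_zipF1 fst) //.
rewrite (sum_zipF2 snd) // (sum_zipF1 snd) //.
rewrite /Lz !sum_zip1 ?sum_zip2 ?size_rcons ?hns ?hms ?hns' ?hms' //.
rewrite !sum_rcons_last => h; apply: (Neq_trans h); apply: feq_Neq; rewrite -red_catr.
by have -> : red (wpow lx (1 - 1 + (1 - 1))) = [::] by []; rewrite cats0.
Qed.

Lemma partII n (n1 m1 : int) ns0 ms0 : size ns0 = size ms0 ->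
  Qequiv (Pn n (n1 :: ns0) (m1 :: ms0))
    (Pn n (rcons (behead (n1 :: ns0)) (last_exp (n1 :: ns0)))
          (rcons (behead (m1 :: ms0)) (last_exp (m1 :: ms0)))).
Proof.
move=> hs. apply: QE. rewrite /Lz /= !last_exp_rot.
rewrite (@zip_rcons _ _ (rcons ns0 _) (rcons ms0 _)) ?size_rcons ?hs // /flat map_rcons flatten_rcons /=.
set B := block n1 m1. set F := flatten _.
apply: R2_trans (R2_conj n _ (finv B)) _. apply: R2_feq.
rewrite finvK -catA. have := cancel_mid' [::] B (F ++ B). by rewrite /= => ->.
Qed.

Lemma partIII n (n1 : int) ns0 ms : size ms = (size ns0).+1 ->
  Qequiv (Pn n (n1 :: ns0) ms)
    (Pn n ms (rcons (behead (n1 :: ns0)) (last_exp (n1 :: ns0)))).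
Proof.
move=> hs. apply: QE. rewrite /Lz /= !last_exp_rot.
set A0 := rcons ns0 _. set B := rcons ms _.
have hsz : size B = (size A0).+1 by rewrite /A0 /B !size_rcons hs.
pose P := wpow lx. pose Q b := [:: ly] ++ wpow lx b ++ [:: linv ly].
set M := flatten [seq Q p.1 ++ P p.2 | p <- zip B (rcons A0 n1)].
have e1 : flat (zip (n1 :: A0) B) ++ P n1 = P n1 ++ M := shift_eq P Q n1 n1 hsz.
set M' := flatten [seq finv [:: ly] ++ (wpow lx p.1 ++ [:: ly] ++ wpow lx p.2)
                   | p <- zip B (rcons A0 n1)].
apply: R2_trans (_ : R2 n _ M) _.
  apply: R2_trans (R2_conj n _ (finv (P n1))) _. apply: R2_feq.
  rewrite finvK e1. have := cancel_mid' [::] (P n1) M. by rewrite /= => ->.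
apply: R2_trans (_ : R2 n _ M') _.
  apply/Neq_R2/Neq_flatten => p.
  have := Neq_cat (y_swap n (wpow lx p.1)) (Neq_refl n (wpow lx p.2)).
  by rewrite -!catA.
apply: R2_trans (R2_conj n _ [:: ly]) _. apply: R2_feq.
rewrite telescope -(cats0 (finv [:: ly])).
have := cancel_mid (flatten [seq (wpow lx p.1 ++ [:: ly] ++ wpow lx p.2) ++ finv [:: ly]
                   | p <- zip B (rcons A0 n1)]) [:: ly] [::].
rewrite cats0 => /= ->.
rewrite /flat cats0; do 2 f_equal; apply: eq_map => p.
by rewrite -!catA.
Qed.

Close Scope ring_scope.
Unset Implicit Arguments.

Theorem lemma3p5 (n k : nat) (ns ms : seq int) :
  (2 <= n)%N -> (1 <= k)%N -> size ns = k -> size ms = k ->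
  all (fun a => a != 0%R) ns -> all (fun a => a != 0%R) ms ->
  [/\ (forall ns' ms' : seq int, size ns' = k -> size ms' = k ->
         (forall i, (i < k)%N ->
            (nth 0%R ns' i = nth 0%R ns i %[mod n%:Z])%Z /\
            (nth 0%R ms' i = nth 0%R ms i %[mod n%:Z])%Z) ->
         Qequiv (Pn n ns ms) (Pn n ns' ms')),
      Qequiv (Pn n ns ms)
             (Pn n (rcons (behead ns) (last_exp ns)) (rcons (behead ms) (last_exp ms)))
    & Qequiv (Pn n ns ms) (Pn n ms (rcons (behead ns) (last_exp ns)))].
Proof.
move=> hn hk hns hms _ _.
split.
- move=> ns' ms' hns' hms' hmod; exact: partI hns hms hns' hms' hmod.
- case: ns hns => [|n1 ns0] hns; first by rewrite -hns in hk.
  case: ms hms => [|m1 ms0] hms; first by rewrite -hms in hk.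
  apply: partII. apply/eqP; rewrite -eqSS; apply/eqP.
  by rewrite /= in hns hms; rewrite hns hms.
- case: ns hns => [|n1 ns0] hns; first by rewrite -hns in hk.
  apply: partIII. by rewrite hms -hns.
Qed.
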